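(* Let $S$ be a numerical semigroup, $D=S^*+S^*$, $X$ its set of nonzero Apéry elements, and $V$ the vertex set of $G(S)$. Then $V$ is a downset in $S^*$, and $V$ coincides with the set of all proper factors of the elements of $X\cap D$, i.e. $V=\{v\in S^*: \exists\, z\in X\cap D,\ z-v\in S^*\}$.
   Context: A numerical semigroup is a subset $S\subseteq\mathbb N$ containing $0$, closed under addition, with finite complement; $S^*=S\setminus\{0\}$, $m=\min S^*$, $X=\{s\in S^*: s-m\notin S\}$. The graph $G(S)$ has edge set all subsets $\{x,y\}\subseteq X$ ($x=y$ allowed) with $x+y\in X$, and vertex set $V$ the endvertices of these edges. For $u\in S^*$, a proper factor of $u$ is $v\in S^*$ with $u-v\in S^*$. A downset in $S^*$ is a subset $I\subseteq S^*$ such that every proper factor of an element of $I$ lies in $I$. *)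

(* Defs.v *)
From mathcomp Require Import all_boot.
Set Implicit Arguments. Unset Strict Implicit. Unset Printing Implicit Defensive.

Definition numerical_semigroup (S : nat -> Prop) : Prop :=
  [/\ S 0,
      (forall a b, S a -> S b -> S (a + b)) &
      (exists N, forall n, N <= n -> S n)].

Definition Sstar (S : nat -> Prop) (x : nat) : Prop := S x /\ 0 < x.

Definition is_multiplicity (S : nat -> Prop) (m : nat) : Prop :=
  Sstar S m /\ forall s, Sstar S s -> m <= s.

(* X = { s in S^* : s - m \notin S }, where s - m is the integer difference
   (a negative integer is never in S). *)
Definition Apery_nz (S : nat -> Prop) (m : nat) (s : nat) : Prop :=
  Sstar S s /\ ~ (m <= s /\ S (s - m)).

Definition Dsum (S : nat -> Prop) (z : nat) : Prop :=
  exists a b, Sstar S a /\ Sstar S b /\ z = a + b.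

Definition proper_factor (S : nat -> Prop) (v u : nat) : Prop :=
  Sstar S v /\ v < u /\ Sstar S (u - v).

Definition downset (S : nat -> Prop) (I : nat -> Prop) : Prop :=
  (forall x, I x -> Sstar S x) /\
  (forall u v, I u -> proper_factor S v u -> I v).

Definition GS_edge (S : nat -> Prop) (m x y : nat) : Prop :=
  Apery_nz S m x /\ Apery_nz S m y /\ Apery_nz S m (x + y).

Definition GS_vertex (S : nat -> Prop) (m v : nat) : Prop :=
  exists y, GS_edge S m v y.

(* Main.v *)
Require Import Defs.
From mathcomp Require Import all_boot.
From mathcomp Require Import zify.

Lemma ap_split (S : nat -> Prop) (m a b : nat) :
  (forall a b, S a -> S b -> S (a + b)) ->
  Sstar S a -> Sstar S b -> Apery_nz S m (a + b) -> Apery_nz S m a.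
Proof.
move=> Hadd Ha Hb [Hab Hn]; split => // [[Hma HSa]].
apply: Hn; split; first by lia.
have -> : a + b - m = (a - m) + b by lia.
by apply: Hadd => //; case: Hb.
Qed.

Lemma sstar_add (S : nat -> Prop) a b :
  (forall a b, S a -> S b -> S (a + b)) ->
  Sstar S a -> Sstar S b -> Sstar S (a + b).
Proof. move=> H [? ?] [? ?]; split; [exact: H | lia]. Qed.

Theorem lemma4p4 (S : nat -> Prop) (m : nat) :
  numerical_semigroup S -> is_multiplicity S m ->
  downset S (GS_vertex S m) /\
  (forall v, GS_vertex S m v <->
     exists z, Apery_nz S m z /\ Dsum S z /\ proper_factor S v z).
Proof.
move=> [H0 Hadd _] _.
have char : forall v, GS_vertex S m v <->
     exists z, Apery_nz S m z /\ Dsum S z /\ proper_factor S v z.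
  move=> v; split.
  - move=> [y [Hv [Hy Hvy]]]; exists (v + y); split => //; split.
      by exists v, y; case: Hv; case: Hy.
    split; first by case: Hv.
    have ? : 0 < y by case: Hy => [[_ ?] _].
    split; first by lia.
    by rewrite addKn; case: Hy.
  - move=> [z [Hz [_ [Hv [Hlt Hzv]]]]].
    have Ez : z = v + (z - v) by lia.
    exists (z - v); split; [|split].
    + by apply: (@ap_split S m v (z - v) Hadd Hv Hzv); rewrite -Ez.
    + by apply: (@ap_split S m (z - v) v Hadd Hzv Hv); rewrite addnC -Ez.
    + by rewrite -Ez.
split => //; split.
  by move=> x [y [[Hx _] _]].
move=> u v Hu [Hv [Hlt Huv]].
apply/char.
move: Hu => [y [Hu [Hy Huy]]].
have Hys : Sstar S y by case: Hy.
exists (u + y); split => //; split.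
  by exists v, (u - v + y); split => //; split; [exact: sstar_add | lia].
split => //; split; first by case: Hys => _; lia.
have -> : u + y - v = (u - v) + y by lia.
exact: sstar_add.
Qed.
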